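(* Let $N\ge2$, $x_1>\cdots>x_N$ real, and $\mathbf A\in\{-1,1\}^{N\times N}$ with $\mathbf A_{i,n}=\mathrm{sign}(x_i-x_n)$. Then $\mathbf A$ is invertible and $$\mathbf A^{-1}=\frac12\begin{pmatrix}\Delta & -\mathbf e\\ \mathbf e_1^T & 1\end{pmatrix},$$ where $\mathbf e=(0,\dots,0,1)^T\in\mathbb R^{N-1}$ and $\mathbf e_1=(1,0,\dots,0)^T\in\mathbb R^{N-1}$.
   Context: $\mathrm{sign}(x)=1$ if $x\ge0$ and $-1$ if $x<0$. $\Delta\in\mathbb R^{(N-1)\times(N-1)}$ is the finite difference matrix with $\Delta_{i,i}=1$, $\Delta_{i,i+1}=-1$, and all other entries $0$. *)

(* Defs.v *)
From HB Require Import structures.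
From mathcomp Require Import all_boot all_order all_algebra.
Set Implicit Arguments. Unset Strict Implicit. Unset Printing Implicit Defensive.
Import Order.TTheory GRing.Theory Num.Theory.
Local Open Scope ring_scope.

Definition sgn {R : realFieldType} (x : R) : R := if 0 <= x then 1 else -1.

Definition Delta {R : pzRingType} (m : nat) : 'M[R]_m :=
  \matrix_(i < m, j < m)
    (if (j == i :> nat) then 1 else if (j == i.+1 :> nat) then -1 else 0).

Definition e_last {R : pzRingType} (m : nat) : 'cV[R]_m.+1 :=
  \col_(i < m.+1) (if (i == m :> nat) then 1 else 0).
Definition e_first {R : pzRingType} (m : nat) : 'cV[R]_m.+1 :=
  \col_(i < m.+1) (if (i == 0 :> nat) then 1 else 0).

Definition signmx {R : realFieldType} (N : nat) (x : 'I_N -> R) : 'M[R]_N :=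
  \matrix_(i < N, k < N) sgn (x i - x k).

(* Main.v *)
Require Import Defs.
From HB Require Import structures.
From mathcomp Require Import all_boot all_order all_algebra.
Import Order.TTheory GRing.Theory Num.Theory.
Local Open Scope ring_scope.

Section S.
Variable R : realFieldType.
Variable n : nat.

Definition Bm : 'M[R]_(n.+2) := castmx (addn1 n.+1, addn1 n.+1)
      ((1 / 2 : R) *: block_mx (Delta n.+1) (- e_last n)
                               (e_first n)^T (1 : 'M[R]_1)).

Lemma BmE (i k : 'I_(n.+2)) : Bm i k = (1/2) * (if (i < n.+1)%N then
   (k == i :> nat)%:R - (k == i.+1 :> nat)%:R
   else (k == 0%N :> nat)%:R + (k == n.+1 :> nat)%:R).
Proof.
rewrite /Bm castmxE mxE.
set i' := cast_ord _ i. set k' := cast_ord _ k.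
have Hi : i = i' :> nat by []. have Hk : k = k' :> nat by [].
congr (_ * _).
case: (splitP i') => [a Ha|a Ha]; case: (splitP k') => [b Hb|b Hb].
- have -> : i' = lshift 1 a by apply: val_inj.
  have -> : k' = lshift 1 b by apply: val_inj.
  rewrite block_mxEul mxE Hi Hk Ha Hb.
  have [->|hne] := eqVneq (b:nat) a; first by rewrite (ltn_eqF (ltnSn a)) subr0.
  rewrite ?sub0r; by case: (nat_of_ord b == a.+1); rewrite ?oppr0.
- have -> : i' = lshift 1 a by apply: val_inj.
  have -> : k' = rshift n.+1 b by apply: val_inj.
  rewrite block_mxEur !mxE Hi Hk Ha Hb (ord1 b) /= addn0 (gtn_eqF (ltn_ord a)) eqSS sub0r [n == _]eq_sym.
  by case: (_ == _).
- have -> : i' = rshift n.+1 a by apply: val_inj.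
  have -> : k' = lshift 1 b by apply: val_inj.
  rewrite block_mxEdl !mxE Hk Hb /= (ltn_eqF (ltn_ord b)) addr0; by case: (_ == _).

- have -> : i' = rshift n.+1 a by apply: val_inj.
  have -> : k' = rshift n.+1 b by apply: val_inj.
  rewrite block_mxEdr !mxE Hk Hb (ord1 b) (ord1 a) /= addn0 eqxx add0r.
  done.
Qed.

Lemma sum_delta (N : nat) (c : 'I_N) (f : 'I_N -> R) :
  \sum_(k < N) ((k : nat) == c)%:R * f k = f c.
Proof.
rewrite (bigD1 c) //= eqxx mul1r big1 ?addr0 // => k hk.
by rewrite val_eqE (negPf hk) mul0r.
Qed.

Lemma sum_delta2 (N : nat) (c : 'I_N) (p : nat) (f : 'I_N -> R) :
  (c : nat) = p -> \sum_(k < N) ((k : nat) == p)%:R * f k = f c.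
Proof. by move=> <-; apply: sum_delta. Qed.

Lemma signmxE (x : 'I_(n.+2) -> R)
  (hx : forall i j : 'I_(n.+2), (i < j)%N -> x j < x i) k j :
  signmx x k j = if (k <= j)%N then 1 else -1.
Proof.
rewrite mxE /sgn.
case: (ltngtP k j) => h.
- by rewrite subr_ge0 ltW // hx.
- by rewrite subr_ge0 leNgt hx.
- have e : k = j by apply: val_inj.
  by rewrite e subrr lexx.
Qed.

Lemma BmA (x : 'I_(n.+2) -> R)
  (hx : forall i j : 'I_(n.+2), (i < j)%N -> x j < x i) :
  Bm *m signmx x = 1%:M.
Proof.
apply/matrixP => i j; rewrite !mxE.
under eq_bigr => k _ do rewrite BmE mul1r -mulrA.
rewrite -mulr_sumr.
case hi: (i < n.+1)%N.
- have hi1 : (i.+1 < n.+2)%N by [].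
  pose i1 : 'I_(n.+2) := Ordinal hi1.
  have -> : \sum_(k < n.+2) (((k : nat) == i)%:R - ((k:nat) == i.+1)%:R) * signmx x k j
     = signmx x i j - signmx x i1 j.
    under eq_bigr => k _ do rewrite mulrBl.
    by rewrite sumrB sum_delta (@sum_delta _ i1).
  rewrite !signmxE //= -val_eqE /=.
  case: (ltngtP i j) => h.
  + by rewrite subrr mulr0.
  + by rewrite subrr mulr0.
  + have two : (1 - -1 : R) = 2%:R by rewrite opprK.
    by rewrite two mulVf // pnatr_eq0.
- have hi' : (i : nat) = n.+1.
    by apply/eqP; rewrite eqn_leq -ltnS ltn_ord leqNgt hi.
  have h0 : (0 < n.+2)%N by [].
  have -> : \sum_(k < n.+2) (((k : nat) == 0%N)%:R + ((k:nat) == n.+1)%:R) * signmx x k j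
     = signmx x (Ordinal h0) j + signmx x i j.
    under eq_bigr => k _ do rewrite mulrDl.
    rewrite big_split /= (@sum_delta _ (Ordinal h0)).
    by rewrite (@sum_delta2 _ i n.+1).
  rewrite !signmxE //= -val_eqE /= hi'.
  have := ltn_ord j; rewrite ltnS leq_eqVlt => /orP [/eqP ->|hj].
  + have two : (1 + 1 : R) = 2%:R by [].
    by rewrite ltnSn eqxx two mulVf // pnatr_eq0.
  + by rewrite (gtn_eqF hj) ltnNge -ltnS hj addrN mulr0.
Qed.
End S.

Theorem lemma21 (R : realFieldType) (n : nat) (x : 'I_(n.+2) -> R)
  (hx : forall i j : 'I_(n.+2), (i < j)%N -> x j < x i) :
  signmx x \in unitmx /\
  invmx (signmx x) =
    castmx (addn1 n.+1, addn1 n.+1)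
      ((1 / 2 : R) *: block_mx (Delta n.+1) (- e_last n)
                               (e_first n)^T (1 : 'M[R]_1)).
Proof.
have h := @BmA R n x hx.
have [_ hu] := mulmx1_unit h.
split => //.
change (invmx (signmx x) = Bm R n).
by rewrite -[invmx _]mul1mx -h -mulmxA mulmxV // mulmx1.
Qed.
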